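(* Let $n\neq 1$ be a real number, $k_n=n-1$, and $k_0,k_1,k_2\in\mathbb{R}$. On the phase space with canonical coordinates $(r,\phi,p_r,p_\phi)$, $r>0$, consider $$H_{na}'=\tfrac12 r^{2n}\Big(p_r^2+\tfrac{p_\phi^2}{r^2}\Big)+\frac{k_0}{r^{2k_n}}+\frac{1}{r^{k_n}}\big(k_1\cos(k_n\phi)+k_2\sin(k_n\phi)\big).$$ With $P_1=r^n\big(p_r\cos(k_n\phi)+\tfrac1r p_\phi\sin(k_n\phi)\big)$ and $P_2=r^n\big(p_r\sin(k_n\phi)-\tfrac1r p_\phi\cos(k_n\phi)\big)$, the function $$J_{a3}'=2k_0p_\phi+k_2P_1-k_1P_2,$$ which is linear in the momenta, is a constant of motion of $H_{na}'$, i.e. $\{J_{a3}',H_{na}'\}=0$.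
   Context: The Poisson bracket is the canonical one in $(r,\phi,p_r,p_\phi)$. A constant of motion of $H$ is a function $F$ with $\{F,H\}=0$. *)

(* Defs.v *)
From Stdlib Require Import Reals.
From Coquelicot Require Import Coquelicot.
Open Scope R_scope.

Definition phase_fun := R -> R -> R -> R -> R.

Definition poisson (F G : phase_fun) (r phi pr pphi : R) : R :=
  Derive (fun x => F x phi pr pphi) r * Derive (fun x => G r phi x pphi) pr
  - Derive (fun x => F r phi x pphi) pr * Derive (fun x => G x phi pr pphi) r
  + Derive (fun x => F r x pr pphi) phi * Derive (fun x => G r phi pr x) pphi
  - Derive (fun x => F r phi pr x) pphi * Derive (fun x => G r x pr pphi) phi.

Definition kn (n : R) : R := n - 1.

(* H'_na; real powers r^a are Rpower r a (meaningful for r > 0). *)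
Definition H_na (n k0 k1 k2 : R) : phase_fun := fun r phi pr pphi =>
  / 2 * Rpower r (2 * n) * (pr ^ 2 + pphi ^ 2 / r ^ 2)
  + k0 / Rpower r (2 * kn n)
  + / Rpower r (kn n) * (k1 * cos (kn n * phi) + k2 * sin (kn n * phi)).

Definition P1 (n : R) : phase_fun := fun r phi pr pphi =>
  Rpower r n * (pr * cos (kn n * phi) + / r * pphi * sin (kn n * phi)).

Definition P2 (n : R) : phase_fun := fun r phi pr pphi =>
  Rpower r n * (pr * sin (kn n * phi) - / r * pphi * cos (kn n * phi)).

Definition J_a3 (n k0 k1 k2 : R) : phase_fun := fun r phi pr pphi =>
  2 * k0 * pphi + k2 * P1 n r phi pr pphi - k1 * P2 n r phi pr pphi.

(* Main.v *)
Require Import Defs.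
From Stdlib Require Import Reals Lra.
From Coquelicot Require Import Coquelicot.
Open Scope R_scope.

Lemma e2 (a r : R) : 0 < r -> exp (2 * a * ln r) = exp (a * ln r) * exp (a * ln r).
Proof. intros. rewrite <- exp_plus. f_equal. ring. Qed.
Lemma e1 (n r : R) : 0 < r -> exp ((n - 1) * ln r) = exp (n * ln r) / r.
Proof. intros. replace ((n-1) * ln r) with (n * ln r + - ln r) by ring.
rewrite exp_plus, exp_Ropp, exp_ln by lra. field. lra. Qed.

Theorem mainTheorem3 (n k0 k1 k2 : R) (hn : n <> 1) :
  forall r phi pr pphi : R, 0 < r ->
    poisson (J_a3 n k0 k1 k2) (H_na n k0 k1 k2) r phi pr pphi = 0.
Proof.
intros r phi pr pphi Hr.
unfold poisson, J_a3, H_na, P1, P2, kn, Rpower.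
assert (Hx : forall a, exp a <> 0) by (intro a; apply Rgt_not_eq, exp_pos).
repeat (erewrite is_derive_unique; [| auto_derive; repeat split; first [apply Hx | lra | apply Rgt_not_eq; nra | apply Rmult_integral_contrapositive; split; lra | idtac]]).
rewrite !(e2 n r Hr), !(e2 (n-1) r Hr), !(e1 n r Hr).
set (E := exp (n * ln r)). set (c := cos ((n-1)*phi)). set (s := sin ((n-1)*phi)).
assert (HE : E <> 0) by apply Hx.
assert (Hcs : s*s + c*c = 1) by (unfold s, c; pose proof (sin2_cos2 ((n-1)*phi)); unfold Rsqr in *; lra).
field_simplify; try lra.

Qed.
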